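(* Let $a\in S^1$ with $a\notin\{0,\tfrac12,\tfrac14,-\tfrac14\}$ and let $W=\{0,a,\tfrac12,a+\tfrac12\}$. Then $P(W)$ holds.
   Context: Identify $S^1$ with $\mathbb{R}/\mathbb{Z}$. The group $O(2)$ acts on $S^1$ by translations $x\mapsto x+a$ and reflections $x\mapsto -x+2a$. A coloring $c:S^1\to\{R,B\}$ is distinguishing if no non-identity $\gamma\in O(2)$ satisfies $c\circ\gamma=c$. For $W\subset S^1$ with trivial pointwise stabilizer in $O(2)$, $P(W)$ holds if every precoloring $c:S^1\setminus W\to\{R,B\}$ extends to a distinguishing coloring of $S^1$. *)

(* Defs.v *)
(* the circle S^1 = R/Z is modelled by real representatives,
   objects on S^1 by 1-periodic functions on R. *)
From Stdlib Require Import Reals.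
Open Scope R_scope.

Inductive color : Type := Red | Blue.

Definition circ_eq (x y : R) : Prop := exists k : Z, x = y + IZR k.

Definition periodic (c : R -> color) : Prop := forall x, c (x + 1) = c x.

Definition in_W (W : R -> Prop) (x : R) : Prop :=
  exists w, W w /\ circ_eq x w.

(* c is distinguishing for the O(2)-action: the translation x |-> x + t
   preserves c only when it is the identity (t = 0 in S^1), and no
   reflection x |-> -x + 2t (never the identity on S^1) preserves c. *)
Definition distinguishing (c : R -> color) : Prop :=
  (forall t : R, (forall x, c (x + t) = c x) -> circ_eq t 0) /\
  (forall t : R, ~ (forall x, c (- x + 2 * t) = c x)).

(* A precolouring is represented by a periodic p (its values on W are
   irrelevant, since only agreement off W is required). *)
Definition P (W : R -> Prop) : Prop :=
  forall p : R -> color, periodic p ->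
    exists c : R -> color,
      periodic c /\ (forall x, ~ in_W W x -> c x = p x) /\ distinguishing c.

(* Main.v *)
Require Import Defs.
From Stdlib Require Import Reals.
From Stdlib Require Import Lra Lia ZArith Classical ClassicalEpsilon.
Open Scope R_scope.

Definition hz (x:R) := exists k:Z, x = IZR k / 2.
Definition fib (f x:R) := exists k:Z, x = f + IZR k / 2.

Ltac izr := rewrite ?plus_IZR, ?minus_IZR, ?mult_IZR, ?opp_IZR in *;
            rewrite ?plus_IZR, ?minus_IZR, ?mult_IZR, ?opp_IZR in *.

Lemma no_half : forall k m : Z, IZR k = IZR m + 1/2 -> False.
Proof. intros k m H. assert (H0: IZR (2*k) = IZR (2*m+1)) by (izr; lra).
  apply eq_IZR in H0. lia. Qed.

Lemma par : forall k:Z, exists m:Z, IZR k / 2 = IZR m \/ IZR k / 2 = IZR m + 1/2.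
Proof. intros k. destruct (Z.Even_or_Odd k) as [[m Hm]|[m Hm]]; exists m; subst; izr; lra. Qed.

Lemma cper : forall c : R -> color, periodic c -> forall (m:Z) x, c (x + IZR m) = c x.
Proof. intros c Hc m. induction m using Z.peano_ind; intros x.
  - rewrite Rplus_0_r; auto.
  - rewrite succ_IZR. replace (x + (IZR m + 1)) with ((x + IZR m) + 1) by ring. rewrite Hc; auto.
  - rewrite <- Z.sub_1_r, minus_IZR.
    replace (x + (IZR m - 1)) with ((x - 1) + IZR m) by ring. rewrite IHm.
    replace x with ((x-1)+1) at 2 by ring. rewrite Hc. auto.
Qed.

Lemma ce_c : forall c, periodic c -> forall x y, circ_eq x y -> c x = c y.
Proof. intros c Hc x y [k Hk]. subst. apply cper; auto. Qed.

Lemma ce_refl : forall x, circ_eq x x.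
Proof. intros x; exists 0%Z; simpl; ring. Qed.
Lemma ce_sym : forall x y, circ_eq x y -> circ_eq y x.
Proof. intros x y [k Hk]; exists (-k)%Z; izr; lra. Qed.
Lemma ce_trans : forall x y z, circ_eq x y -> circ_eq y z -> circ_eq x z.
Proof. intros x y z [k Hk] [m Hm]; exists (k+m)%Z; izr; lra. Qed.

Lemma Ha_of : forall a, ~ circ_eq a 0 -> ~ circ_eq a (1/2) ->
  ~ circ_eq a (1/4) -> ~ circ_eq a (- (1/4)) -> forall k:Z, 4*a <> IZR k.
Proof. intros a h0 h1 h2 h3 k Hk.
  pose proof (Z.div_mod k 4 ltac:(lia)) as Hd.
  pose proof (Z.mod_pos_bound k 4 ltac:(lia)) as Hb.
  set (q := (k/4)%Z) in *. set (r := (k mod 4)%Z) in *.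
  assert (Hr: (r = 0 \/ r = 1 \/ r = 2 \/ r = 3)%Z) by lia.
  assert (HK: IZR k = 4 * IZR q + IZR r) by (rewrite Hd; izr; ring).
  destruct Hr as [Hr|[Hr|[Hr|Hr]]]; rewrite Hr in HK.
  - apply h0; exists q; lra.
  - apply h2; exists q; lra.
  - apply h1; exists q; lra.
  - apply h3; exists (q+1)%Z; izr; lra.
Qed.

Definition sym_t (c : R -> color) t := forall x, c (x + t) = c x.
Definition sym_r (c : R -> color) t := forall x, c (- x + 2 * t) = c x.

Lemma color_eq_dec : forall u v : color, {u = v} + {u <> v}.
Proof. decide equality. Defined.

Definition lab (c : R -> color) x : option color :=
  if color_eq_dec (c x) (c (x + 1/2)) then Some (c x) else None.
Definition wsym_t c t := forall x, lab c (x + t) = lab c x.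
Definition wsym_r c t := forall x, lab c (- x + 2 * t) = lab c x.

Lemma lab_vals : forall c x u v, c x = u -> c (x + 1/2) = v ->
  lab c x = if color_eq_dec u v then Some u else None.
Proof. intros; unfold lab; rewrite H, H0; reflexivity. Qed.

Lemma W1 : forall c t, periodic c -> sym_t c t -> wsym_t c t.
Proof. intros c t Hc H x. unfold lab. rewrite H.
  replace (x + t + 1/2) with ((x + 1/2) + t) by ring. rewrite H. reflexivity. Qed.

Lemma W2 : forall c t, periodic c -> sym_r c t -> wsym_r c t.
Proof. intros c t Hc H x. unfold lab. rewrite H.
  assert (E: c (- x + 2 * t + 1/2) = c (x + 1/2)).
  { rewrite <- (H (x + 1/2)). apply ce_c; auto. exists 1%Z. simpl. lra. }
  rewrite E. reflexivity. Qed.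

Lemma W3 : forall c r s, wsym_r c r -> wsym_r c s -> wsym_t c (2*r - 2*s).
Proof. intros c r s Hr Hs x.
  replace (x + (2*r - 2*s)) with (- (- x + 2*s) + 2 * r) by ring.
  rewrite Hr, Hs. reflexivity. Qed.

Lemma W4 : forall c x, periodic c -> lab c (x + 1/2) = lab c x.
Proof. intros c x Hc. unfold lab.
  replace (x + 1/2 + 1/2) with (x + 1) by field. rewrite Hc.
  destruct (color_eq_dec (c (x + 1/2)) (c x)); destruct (color_eq_dec (c x) (c (x + 1/2)));
  congruence. Qed.

Lemma lab_int : forall c x (m:Z), periodic c -> lab c (x + IZR m) = lab c x.
Proof. intros c x m Hc. unfold lab. rewrite cper by auto.
  replace (x + IZR m + 1/2) with ((x + 1/2) + IZR m) by ring. rewrite cper by auto.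
  reflexivity. Qed.

Lemma LabHalf : forall c x (k:Z), periodic c -> lab c (x + IZR k / 2) = lab c x.
Proof. intros c x k Hc. destruct (par k) as [m [Hm|Hm]]; rewrite Hm.
  - apply lab_int; auto.
  - replace (x + (IZR m + 1/2)) with ((x + 1/2) + IZR m) by ring.
    rewrite lab_int by auto. apply W4; auto. Qed.

Lemma TrKill : forall c y t, periodic c -> (forall t, wsym_t c t -> hz t) ->
  c y <> c (y + 1/2) -> sym_t c t -> circ_eq t 0.
Proof. intros c y t Hc Htr Hy Ht.
  destruct (Htr t (W1 c t Hc Ht)) as [k Hk]. destruct (par k) as [m [Hm|Hm]]; rewrite Hm in Hk.
  - exists m; lra.
  - exfalso. apply Hy. rewrite <- (Ht y). apply ce_c; auto. exists m. izr. lra. Qed.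

Lemma SameRefl : forall (c c' : R -> color) f r s, periodic c' ->
  sym_r c r -> sym_r c' s -> (exists k:Z, 2*s = 2*r + IZR k) ->
  (forall x, ~ fib f x -> c x = c' x) -> c f <> c' f -> fib f (- f + 2 * r).
Proof. intros c c' f r s Hc' Hr Hs [k Hk] Hag Hf.
  apply NNPP; intro Hn. apply Hf. rewrite <- (Hr f), Hag by auto. rewrite <- (Hs f).
  apply ce_c; auto. exists (-k)%Z. izr. lra. Qed.

Lemma SigmaTrick : forall (c c' : R -> color) f r s x, periodic c ->
  sym_r c r -> sym_r c' s -> (exists k:Z, 2*s = 2*r + IZR k + 1/2) ->
  (forall x, ~ fib f x -> c x = c' x) -> ~ fib f x -> ~ fib f (- x + 2 * s) ->
  c (x + 1/2) = c x.
Proof. intros c c' f r s x Hc Hr Hs [k Hk] Hag Hx Hx2.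
  rewrite <- (Hr (x + 1/2)).
  rewrite (ce_c c Hc _ (- x + 2 * s)) by (exists (-k-1)%Z; izr; lra).
  rewrite Hag by auto. rewrite Hs. rewrite Hag by auto. reflexivity. Qed.

Lemma hz_split : forall r s, hz (2*r - 2*s) ->
  (exists k:Z, 2*s = 2*r + IZR k) \/ (exists k:Z, 2*s = 2*r + IZR k + 1/2).
Proof. intros r s [j Hj]. destruct (par j) as [m [Hm|Hm]]; rewrite Hm in Hj.
  - left; exists (-m)%Z; izr; lra.
  - right; exists (-m-1)%Z; izr; lra. Qed.

Lemma notdist : forall c, ~ distinguishing c ->
  (exists t, sym_t c t /\ ~ circ_eq t 0) \/ (exists r, sym_r c r).
Proof. intros c H. unfold distinguishing in H.
  destruct (classic (exists t, sym_t c t /\ ~ circ_eq t 0)) as [E|E]; [left; auto|right].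
  apply NNPP; intro N. apply H; split.
  - intros t Ht. apply NNPP; intro N2. apply E; exists t; split; auto.
  - intros t Ht. apply N; exists t; exact Ht. Qed.

Lemma nfib_half : forall f x, ~ fib f x -> ~ fib f (x + 1/2).
Proof. intros f x H [k Hk]; apply H; exists (k - 1)%Z; izr; lra. Qed.

Lemma Astr_t : forall c y, periodic c -> c y <> c (y + 1/2) ->
  (forall x, c x <> c (x + 1/2) -> hz (x - y)) ->
  forall t, sym_t c t -> circ_eq t 0.
Proof. intros c y Hc Hy HA t Ht.
  assert (H1: c (y + t) <> c (y + t + 1/2)).
  { replace (y + t + 1/2) with ((y + 1/2) + t) by ring. rewrite !Ht. auto. }
  destruct (HA _ H1) as [k Hk]. destruct (par k) as [m [Hm|Hm]]; rewrite Hm in Hk.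
  - exists m; lra.
  - exfalso. apply Hy. rewrite <- (Ht y). apply ce_c; auto. exists m. lra. Qed.

Lemma Astr_r : forall c y, periodic c -> c y <> c (y + 1/2) ->
  (forall x, c x <> c (x + 1/2) -> hz (x - y)) ->
  forall r, sym_r c r -> hz (2*r - 2*y).
Proof. intros c y Hc Hy HA r Hr.
  assert (H1: c (- y + 2 * r) <> c (- y + 2 * r + 1/2)).
  { rewrite Hr. rewrite (ce_c c Hc (- y + 2 * r + 1/2) (- (y + 1/2) + 2 * r)) by (exists 1%Z; lra).
    rewrite Hr. auto. }
  destruct (HA _ H1) as [k Hk]. exists k. lra. Qed.

Lemma Core : forall (c c' : R -> color) f y, periodic c -> periodic c' ->
  (forall x, ~ fib f x -> c x = c' x) -> c f <> c' f ->
  c y <> c (y + 1/2) -> c' y <> c' (y + 1/2) ->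
  (forall x, c x <> c (x + 1/2) -> hz (x - y)) ->
  (forall x, c' x <> c' (x + 1/2) -> hz (x - y)) ->
  ~ fib f y -> ~ hz (2*y - 2*f) -> distinguishing c \/ distinguishing c'.
Proof. intros c c' f y Hc Hc' Hag Hf Hy Hy' HA HA' Hny Hg.
  destruct (classic (distinguishing c)) as [D|D]; [left; auto|].
  destruct (classic (distinguishing c')) as [D'|D']; [right; auto|]. exfalso.
  destruct (notdist c D) as [[t [Ht Hnt]]|[r Hr]].
  { apply Hnt; exact (Astr_t c y Hc Hy HA t Ht). }
  destruct (notdist c' D') as [[t [Ht Hnt]]|[s Hs]].
  { apply Hnt; exact (Astr_t c' y Hc' Hy' HA' t Ht). }
  destruct (Astr_r c y Hc Hy HA r Hr) as [k1 Hk1].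
  destruct (Astr_r c' y Hc' Hy' HA' s Hs) as [k2 Hk2].
  assert (Hrs: hz (2*r - 2*s)) by (exists (k1 - k2)%Z; izr; lra).
  destruct (hz_split r s Hrs) as [E|E].
  - destruct (SameRefl c c' f r s Hc' Hr Hs E Hag Hf) as [k Hk].
    apply Hg. exists (k - k1)%Z. izr. lra.
  - destruct (classic (fib f (- y + 2 * s))) as [[k Hk]|N].
    + apply Hny. exists (k - k2)%Z. izr. lra.
    + apply Hy. symmetry. eapply SigmaTrick; eauto.
Qed.

Lemma G2 : forall (c c' : R -> color) f y z, periodic c -> periodic c' ->
  (forall x, lab c x = lab c' x) ->
  (forall x, ~ fib f x -> c x = c' x) -> c f <> c' f ->
  (forall t, wsym_t c t -> hz t) ->
  c y <> c (y + 1/2) -> c z <> c (z + 1/2) -> ~ fib f y -> ~ fib f z -> ~ hz (y - z) ->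
  distinguishing c \/ distinguishing c' \/ exists r, sym_r c r /\ hz (2*r - 2*f).
Proof. intros c c' f y z Hc Hc' Hlab Hag Hf Htr Hy Hz Hny Hnz Hyz.
  destruct (classic (distinguishing c)) as [D|D]; [left; auto|].
  destruct (classic (distinguishing c')) as [D'|D']; [right; left; auto|]. right; right.
  assert (Htr' : forall t, wsym_t c' t -> hz t).
  { intros t Ht. apply Htr. intros x. rewrite !Hlab. apply Ht. }
  assert (Hy' : c' y <> c' (y + 1/2)).
  { rewrite <- !Hag; auto. apply nfib_half; auto. }
  destruct (notdist c D) as [[t [Ht Hnt]]|[r Hr]].
  { exfalso; apply Hnt; exact (TrKill c y t Hc Htr Hy Ht). }
  destruct (notdist c' D') as [[t [Ht Hnt]]|[s Hs]].
  { exfalso; apply Hnt; exact (TrKill c' y t Hc' Htr' Hy' Ht). }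
  assert (Ws : wsym_r c s).
  { intros x. rewrite !Hlab. apply W2; auto. }
  pose proof (Htr _ (W3 c r s (W2 c r Hc Hr) Ws)) as Hrs.
  destruct (hz_split r s Hrs) as [E|E].
  - destruct (SameRefl c c' f r s Hc' Hr Hs E Hag Hf) as [k Hk].
    exists r; split; auto. exists k. lra.
  - exfalso.
    destruct (classic (fib f (- y + 2 * s))) as [[k Hk]|N].
    + destruct (classic (fib f (- z + 2 * s))) as [[l Hl]|N2].
      * apply Hyz. exists (l - k)%Z. izr. lra.
      * apply Hz. symmetry. eapply SigmaTrick; eauto.
    + apply Hy. symmetry. eapply SigmaTrick; eauto.
Qed.

Lemma Q1 : forall (c c' : R -> color) f t u, periodic c -> periodic c' ->
  (forall x, ~ fib f x -> c x = c' x) -> lab c f <> lab c' f ->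
  wsym_t c t -> ~ hz t -> wsym_t c' u -> ~ hz u -> False.
Proof. intros c c' f t u Hc Hc' Hag Hlf Ht Hnt Hu Hnu.
  assert (Hlag : forall x, ~ fib f x -> lab c x = lab c' x).
  { intros x Hx. unfold lab. rewrite !Hag; auto. apply nfib_half; auto. }
  apply Hlf.
  assert (E1 : lab c' f = lab c (f - u)).
  { rewrite (Hlag (f - u)). rewrite <- (Hu (f - u)). f_equal. ring.
    intros [k Hk]. apply Hnu. exists (-k)%Z. izr. lra. }
  rewrite E1.
  destruct (classic (hz (t - u))) as [[k Hk]|N].
  - replace (f - u) with ((f - t) + IZR k / 2) by lra. rewrite LabHalf by auto.
    rewrite <- (Ht (f - t)). f_equal. ring.
  - rewrite <- (Ht (f - u)). rewrite (Hlag (f - u + t)).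
    2:{ intros [k Hk]. apply N. exists k. lra. }
    rewrite <- (Hu (f - u + t)). replace (f - u + t + u) with (f + t) by ring.
    rewrite <- (Hlag (f + t)). symmetry. apply Ht.
    intros [k Hk]. apply Hnt. exists k. lra.
Qed.

Definition em := excluded_middle_informative.

Definition mk (p : R -> color) (a : R) (u0 u1 u2 u3 : color) (x : R) : color :=
  if em (circ_eq x 0) then u0
  else if em (circ_eq x (1/2)) then u1
  else if em (circ_eq x a) then u2
  else if em (circ_eq x (a + 1/2)) then u3
  else p x.

Definition notW a x := ~ circ_eq x 0 /\ ~ circ_eq x (1/2) /\ ~ circ_eq x a /\ ~ circ_eq x (a + 1/2).

Lemma d_h0 : ~ circ_eq (1/2) 0.
Proof. intros [k Hk]. apply (no_half k 0). simpl. lra. Qed.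


Lemma d_a0 : forall a, (forall k:Z, 4*a <> IZR k) -> ~ circ_eq a 0.
Proof. intros a Ha [k Hk]. apply (Ha (4*k)%Z). izr. lra. Qed.
Lemma d_ah : forall a, (forall k:Z, 4*a <> IZR k) -> ~ circ_eq a (1/2).
Proof. intros a Ha [k Hk]. apply (Ha (4*k+2)%Z). izr. lra. Qed.
Lemma d_A0 : forall a, (forall k:Z, 4*a <> IZR k) -> ~ circ_eq (a + 1/2) 0.
Proof. intros a Ha [k Hk]. apply (Ha (4*k-2)%Z). izr. lra. Qed.
Lemma d_Ah : forall a, (forall k:Z, 4*a <> IZR k) -> ~ circ_eq (a + 1/2) (1/2).
Proof. intros a Ha [k Hk]. apply (Ha (4*k)%Z). izr. lra. Qed.
Lemma d_Aa : forall a, ~ circ_eq (a + 1/2) a.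
Proof. intros a [k Hk]. apply (no_half k 0). simpl. lra. Qed.

Lemma ce_ne : forall x y z, circ_eq x y -> ~ circ_eq y z -> ~ circ_eq x z.
Proof. intros x y z H N H2. apply N. eapply ce_trans; [apply ce_sym; eauto | eauto]. Qed.

Lemma mk_v0 : forall p a u0 u1 u2 u3 x, circ_eq x 0 -> mk p a u0 u1 u2 u3 x = u0.
Proof. intros. unfold mk. destruct (em (circ_eq x 0)); [auto|contradiction]. Qed.

Lemma mk_v1 : forall p a u0 u1 u2 u3 x, circ_eq x (1/2) -> mk p a u0 u1 u2 u3 x = u1.
Proof. intros. unfold mk. destruct (em (circ_eq x 0)) as [E|_].
  - exfalso. apply d_h0. eapply ce_trans; [apply ce_sym; eauto|eauto].
  - destruct (em (circ_eq x (1/2))); [auto|contradiction]. Qed.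

Lemma mk_v2 : forall p a u0 u1 u2 u3 x, (forall k:Z, 4*a <> IZR k) ->
  circ_eq x a -> mk p a u0 u1 u2 u3 x = u2.
Proof. intros p a u0 u1 u2 u3 x Ha H. unfold mk.
  destruct (em (circ_eq x 0)) as [E|_]. { exfalso; exact (ce_ne x a 0 H (d_a0 a Ha) E). }
  destruct (em (circ_eq x (1/2))) as [E|_]. { exfalso; exact (ce_ne x a (1/2) H (d_ah a Ha) E). }
  destruct (em (circ_eq x a)); [auto|contradiction]. Qed.

Lemma mk_v3 : forall p a u0 u1 u2 u3 x, (forall k:Z, 4*a <> IZR k) ->
  circ_eq x (a + 1/2) -> mk p a u0 u1 u2 u3 x = u3.
Proof. intros p a u0 u1 u2 u3 x Ha H. unfold mk.
  destruct (em (circ_eq x 0)) as [E|_]. { exfalso; exact (ce_ne x _ 0 H (d_A0 a Ha) E). }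
  destruct (em (circ_eq x (1/2))) as [E|_]. { exfalso; exact (ce_ne x _ (1/2) H (d_Ah a Ha) E). }
  destruct (em (circ_eq x a)) as [E|_]. { exfalso; exact (ce_ne x _ a H (d_Aa a) E). }
  destruct (em (circ_eq x (a + 1/2))); [auto|contradiction]. Qed.

Lemma mk_vp : forall p a u0 u1 u2 u3 x, notW a x -> mk p a u0 u1 u2 u3 x = p x.
Proof. intros p a u0 u1 u2 u3 x [N0 [N1 [N2 N3]]]. unfold mk.
  destruct (em (circ_eq x 0)); [contradiction|].
  destruct (em (circ_eq x (1/2))); [contradiction|].
  destruct (em (circ_eq x a)); [contradiction|].
  destruct (em (circ_eq x (a + 1/2))); [contradiction|]. auto. Qed.

Lemma cls : forall a x, circ_eq x 0 \/ circ_eq x (1/2) \/ circ_eq x a \/ circ_eq x (a + 1/2) \/ notW a x.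
Proof. intros a x. unfold notW. tauto. Qed.

Lemma sh0 : forall x, circ_eq x 0 -> circ_eq (x + 1/2) (1/2).
Proof. intros x [k Hk]; exists k; lra. Qed.
Lemma sh1 : forall x, circ_eq x (1/2) -> circ_eq (x + 1/2) 0.
Proof. intros x [k Hk]; exists (k+1)%Z; izr; lra. Qed.
Lemma sh2 : forall a x, circ_eq x a -> circ_eq (x + 1/2) (a + 1/2).
Proof. intros a x [k Hk]; exists k; lra. Qed.
Lemma sh3 : forall a x, circ_eq x (a + 1/2) -> circ_eq (x + 1/2) a.
Proof. intros a x [k Hk]; exists (k+1)%Z; izr; lra. Qed.
Lemma shW : forall a x, notW a x -> notW a (x + 1/2).
Proof. intros a x [N0 [N1 [N2 N3]]]. repeat split; intros [k Hk].
  - apply N1; exists (k-1)%Z; izr; lra.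
  - apply N0; exists k; lra.
  - apply N3; exists (k-1)%Z; izr; lra.
  - apply N2; exists k; lra. Qed.
Lemma p1 : forall x w, circ_eq x w -> circ_eq (x + 1) w.
Proof. intros x w [k Hk]; exists (k+1)%Z; izr; lra. Qed.
Lemma p1W : forall a x, notW a x -> notW a (x + 1).
Proof. intros a x [N0 [N1 [N2 N3]]]. repeat split; intros [k Hk].
  - apply N0; exists (k-1)%Z; izr; lra.
  - apply N1; exists (k-1)%Z; izr; lra.
  - apply N2; exists (k-1)%Z; izr; lra.
  - apply N3; exists (k-1)%Z; izr; lra. Qed.

Lemma mk_per : forall p a u0 u1 u2 u3, (forall k:Z, 4*a <> IZR k) -> periodic p ->
  periodic (mk p a u0 u1 u2 u3).
Proof. intros p a u0 u1 u2 u3 Ha Hp x.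
  destruct (cls a x) as [H|[H|[H|[H|H]]]].
  - rewrite !mk_v0; auto. apply p1; auto.
  - rewrite !mk_v1; auto. apply p1; auto.
  - rewrite !mk_v2; auto. apply p1; auto.
  - rewrite !mk_v3; auto. apply p1; auto.
  - rewrite !mk_vp; auto. apply p1W; auto. Qed.

Lemma fib0_ce : forall x, fib 0 x -> circ_eq x 0 \/ circ_eq x (1/2).
Proof. intros x [k Hk]. destruct (par k) as [m [Hm|Hm]]; rewrite Hm in Hk.
  - left; exists m; lra.
  - right; exists m; lra. Qed.
Lemma fiba_ce : forall a x, fib a x -> circ_eq x a \/ circ_eq x (a + 1/2).
Proof. intros a x [k Hk]. destruct (par k) as [m [Hm|Hm]]; rewrite Hm in Hk.
  - left; exists m; lra.
  - right; exists m; lra. Qed.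
Lemma ce_fib0 : forall x, circ_eq x 0 \/ circ_eq x (1/2) -> fib 0 x.
Proof. intros x [[k Hk]|[k Hk]]; [exists (2*k)%Z | exists (2*k+1)%Z]; izr; lra. Qed.
Lemma ce_fiba : forall a x, circ_eq x a \/ circ_eq x (a + 1/2) -> fib a x.
Proof. intros a x [[k Hk]|[k Hk]]; [exists (2*k)%Z | exists (2*k+1)%Z]; izr; lra. Qed.

Lemma agree0 : forall p a u0 u1 v0 v1 u2 u3 x, (forall k:Z, 4*a <> IZR k) -> ~ fib 0 x ->
  mk p a u0 u1 u2 u3 x = mk p a v0 v1 u2 u3 x.
Proof. intros p a u0 u1 v0 v1 u2 u3 x Ha N.
  destruct (cls a x) as [H|[H|[H|[H|H]]]].
  - exfalso; apply N, ce_fib0; auto.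
  - exfalso; apply N, ce_fib0; auto.
  - rewrite !mk_v2; auto.
  - rewrite !mk_v3; auto.
  - rewrite !mk_vp; auto. Qed.

Lemma agreea : forall p a u0 u1 u2 u3 v2 v3 x, (forall k:Z, 4*a <> IZR k) -> ~ fib a x ->
  mk p a u0 u1 u2 u3 x = mk p a u0 u1 v2 v3 x.
Proof. intros p a u0 u1 u2 u3 v2 v3 x Ha N.
  destruct (cls a x) as [H|[H|[H|[H|H]]]].
  - rewrite !mk_v0; auto.
  - rewrite !mk_v1; auto.
  - exfalso; apply N, ce_fiba; auto.
  - exfalso; apply N, ce_fiba; auto.
  - rewrite !mk_vp; auto. Qed.

Lemma lab_swap0 : forall p a u0 u1 u2 u3 x, (forall k:Z, 4*a <> IZR k) -> u0 <> u1 ->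
  lab (mk p a u0 u1 u2 u3) x = lab (mk p a u1 u0 u2 u3) x.
Proof. intros p a u0 u1 u2 u3 x Ha Hu.
  destruct (cls a x) as [H|[H|[H|[H|H]]]].
  - rewrite (lab_vals _ x u0 u1), (lab_vals _ x u1 u0);
      try (apply mk_v0; auto); try (apply mk_v1; auto; apply sh0; auto).
    destruct (color_eq_dec u0 u1), (color_eq_dec u1 u0); congruence.
  - rewrite (lab_vals _ x u1 u0), (lab_vals _ x u0 u1);
      try (apply mk_v1; auto); try (apply mk_v0; auto; apply sh1; auto).
    destruct (color_eq_dec u0 u1), (color_eq_dec u1 u0); congruence.
  - rewrite (lab_vals _ x u2 u3), (lab_vals _ x u2 u3);
      try (apply mk_v2; auto); try (apply mk_v3; auto; apply sh2; auto). auto.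
  - rewrite (lab_vals _ x u3 u2), (lab_vals _ x u3 u2);
      try (apply mk_v3; auto); try (apply mk_v2; auto; apply sh3; auto). auto.
  - unfold lab. rewrite !mk_vp; try (apply shW); auto. Qed.

Lemma lab_swapa : forall p a u0 u1 u2 u3 x, (forall k:Z, 4*a <> IZR k) -> u2 <> u3 ->
  lab (mk p a u0 u1 u2 u3) x = lab (mk p a u0 u1 u3 u2) x.
Proof. intros p a u0 u1 u2 u3 x Ha Hu.
  destruct (cls a x) as [H|[H|[H|[H|H]]]].
  - rewrite (lab_vals _ x u0 u1), (lab_vals _ x u0 u1);
      try (apply mk_v0; auto); try (apply mk_v1; auto; apply sh0; auto). auto.
  - rewrite (lab_vals _ x u1 u0), (lab_vals _ x u1 u0);
      try (apply mk_v1; auto); try (apply mk_v0; auto; apply sh1; auto). auto.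
  - rewrite (lab_vals _ x u2 u3), (lab_vals _ x u3 u2);
      try (apply mk_v2; auto); try (apply mk_v3; auto; apply sh2; auto).
    destruct (color_eq_dec u2 u3), (color_eq_dec u3 u2); congruence.
  - rewrite (lab_vals _ x u3 u2), (lab_vals _ x u2 u3);
      try (apply mk_v3; auto); try (apply mk_v2; auto; apply sh3; auto).
    destruct (color_eq_dec u2 u3), (color_eq_dec u3 u2); congruence.
  - unfold lab. rewrite !mk_vp; try (apply shW); auto. Qed.

Lemma nW_f0 : forall a x, notW a x -> ~ fib 0 x.
Proof. intros a x [N0 [N1 _]] F. destruct (fib0_ce x F); auto. Qed.
Lemma nW_fa : forall a x, notW a x -> ~ fib a x.
Proof. intros a x [_ [_ [N2 N3]]] F. destruct (fiba_ce a x F); auto. Qed.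

Lemma hz0 : forall x, circ_eq x 0 -> hz (x - 0).
Proof. intros x [k Hk]. exists (2*k)%Z. izr. lra. Qed.
Lemma hz1 : forall x, circ_eq x (1/2) -> hz (x - 0).
Proof. intros x [k Hk]. exists (2*k+1)%Z. izr. lra. Qed.

Lemma A_case1 : forall p a u0 u1 v, (forall k:Z, 4*a <> IZR k) ->
  (forall x, notW a x -> p x = p (x + 1/2)) ->
  forall x, mk p a u0 u1 v v x <> mk p a u0 u1 v v (x + 1/2) -> hz (x - 0).
Proof. intros p a u0 u1 v Ha H1 x Hx.
  destruct (cls a x) as [H|[H|[H|[H|H]]]].
  - apply hz0; auto.
  - apply hz1; auto.
  - exfalso; apply Hx. rewrite mk_v2, mk_v3; auto. apply sh2; auto.
  - exfalso; apply Hx. rewrite mk_v3, mk_v2; auto. apply sh3; auto.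
  - exfalso; apply Hx. rewrite !mk_vp; auto. apply shW; auto. Qed.

Lemma A_unif : forall p a u v y, (forall k:Z, 4*a <> IZR k) ->
  (forall x, notW a x -> p x <> p (x + 1/2) -> hz (x - y)) ->
  forall x, mk p a u u v v x <> mk p a u u v v (x + 1/2) -> hz (x - y).
Proof. intros p a u v y Ha H1 x Hx.
  destruct (cls a x) as [H|[H|[H|[H|H]]]].
  - exfalso; apply Hx. rewrite mk_v0, mk_v1; auto. apply sh0; auto.
  - exfalso; apply Hx. rewrite mk_v1, mk_v0; auto. apply sh1; auto.
  - exfalso; apply Hx. rewrite mk_v2, mk_v3; auto. apply sh2; auto.
  - exfalso; apply Hx. rewrite mk_v3, mk_v2; auto. apply sh3; auto.
  - apply H1; auto. rewrite !mk_vp in Hx; auto. apply shW; auto. Qed.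

Lemma nWinW : forall a x, ~ in_W (fun w => w = 0 \/ w = a \/ w = 1/2 \/ w = a + 1/2) x -> notW a x.
Proof. intros a x N. repeat split; intro H; apply N.
  - exists 0; split; auto.
  - exists (1/2); split; auto.
  - exists a; split; auto.
  - exists (a + 1/2); split; auto. Qed.

Lemma vp_half : forall p a u0 u1 u2 u3 y, notW a y ->
  mk p a u0 u1 u2 u3 y <> mk p a u0 u1 u2 u3 (y + 1/2) <-> p y <> p (y + 1/2).
Proof. intros. rewrite !mk_vp; try tauto. apply shW; auto. Qed.

Theorem lemma2p3p4 (a : R)
  (h0 : ~ circ_eq a 0) (h1 : ~ circ_eq a (1/2))
  (h2 : ~ circ_eq a (1/4)) (h3 : ~ circ_eq a (- (1/4))) :
  P (fun w => w = 0 \/ w = a \/ w = 1/2 \/ w = a + 1/2).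
Proof.
  pose proof (Ha_of a h0 h1 h2 h3) as Ha.
  intros p Hp.
  assert (FIN : forall u0 u1 u2 u3, distinguishing (mk p a u0 u1 u2 u3) ->
     exists c, periodic c /\ (forall x, ~ in_W (fun w => w = 0 \/ w = a \/ w = 1/2 \/ w = a + 1/2) x -> c x = p x) /\ distinguishing c).
  { intros u0 u1 u2 u3 D. exists (mk p a u0 u1 u2 u3). split; [apply mk_per; auto|]. split; auto.
    intros x Hx. apply mk_vp. apply nWinW; auto. }
  assert (Hfa0 : ~ fib a 0).
  { intros [k Hk]. apply (Ha (-2*k)%Z). izr. lra. }
  destruct (classic (exists y z, notW a y /\ notW a z /\ p y <> p (y+1/2) /\ p z <> p (z+1/2) /\ ~ hz (y - z)))
    as [[y [z [Hy [Hz [Py [Pz Hyz]]]]]] | N3].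
  -
    assert (nf0y := nW_f0 a y Hy). assert (nf0z := nW_f0 a z Hz).
    assert (nfay := nW_fa a y Hy). assert (nfaz := nW_fa a z Hz).
    set (c00 := mk p a Red Blue Red Blue).
    assert (Hc00 : periodic c00) by (apply mk_per; auto).
    assert (Vy : forall u0 u1 u2 u3, mk p a u0 u1 u2 u3 y <> mk p a u0 u1 u2 u3 (y + 1/2)).
    { intros; apply vp_half; auto. }
    assert (Vz : forall u0 u1 u2 u3, mk p a u0 u1 u2 u3 z <> mk p a u0 u1 u2 u3 (z + 1/2)).
    { intros; apply vp_half; auto. }
    destruct (classic (exists t, wsym_t c00 t /\ ~ hz t)) as [[t [Ht Hnt]]|NT].
    + assert (LA : forall u v, lab (mk p a Red Blue u v) a = if color_eq_dec u v then Some u else None).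
      { intros u v. apply lab_vals. apply mk_v2; auto; apply ce_refl. apply mk_v3; auto. apply sh2, ce_refl. }
      assert (Hd : forall u, wsym_t (mk p a Red Blue Red Red) u -> hz u).
      { intros u Hu. apply NNPP; intro Nu.
        apply (Q1 c00 (mk p a Red Blue Red Red) a t u); auto; try (apply mk_per; auto).
        - intros x Hx. apply agreea; auto.
        - unfold c00. rewrite !LA. cbn. discriminate. }
      assert (He : forall u, wsym_t (mk p a Red Blue Blue Blue) u -> hz u).
      { intros u Hu. apply NNPP; intro Nu.
        apply (Q1 c00 (mk p a Red Blue Blue Blue) a t u); auto; try (apply mk_per; auto).
        - intros x Hx. apply agreea; auto.
        - unfold c00. rewrite !LA. cbn. discriminate. }
      destruct (G2 (mk p a Red Blue Red Red) (mk p a Blue Red Red Red) 0 y z) as [D|[D|[rd [Srd Hrd]]]];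
        try (apply mk_per; auto); auto.
      { intros x. apply lab_swap0; auto; discriminate. }
      { intros x Hx. apply agree0; auto. }
      { rewrite !mk_v0; try apply ce_refl. discriminate. }
      { eapply FIN; eauto. } { eapply FIN; eauto. }
      destruct (G2 (mk p a Red Blue Blue Blue) (mk p a Blue Red Blue Blue) 0 y z) as [D|[D|[re [Sre Hre]]]];
        try (apply mk_per; auto); auto.
      { intros x. apply lab_swap0; auto; discriminate. }
      { intros x Hx. apply agree0; auto. }
      { rewrite !mk_v0; try apply ce_refl. discriminate. }
      { eapply FIN; eauto. } { eapply FIN; eauto. }
      exfalso.
      destruct Hrd as [m1 Hm1]. destruct Hre as [m2 Hm2].
      assert (Hrs : hz (2*rd - 2*re)) by (exists (m1 - m2)%Z; izr; lra).
      destruct (hz_split rd re Hrs) as [E|E].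
      * destruct (SameRefl (mk p a Red Blue Red Red) (mk p a Red Blue Blue Blue) a rd re) as [k Hk];
          try (apply mk_per; auto); auto.
        { intros x Hx. apply agreea; auto. }
        { rewrite !mk_v2; try apply ce_refl; auto. discriminate. }
        apply (Ha (m1 - k)%Z). izr. lra.
      * assert (Q : mk p a Red Blue Red Red (0 + 1/2) = mk p a Red Blue Red Red 0).
        { apply (SigmaTrick _ (mk p a Red Blue Blue Blue) a rd re 0); try (apply mk_per; auto); auto.
          - intros x Hx. apply agreea; auto.
          - intros [k Hk]. apply (Ha (2*(m2 - k))%Z). izr. lra. }
        rewrite (mk_v0 p a Red Blue Red Red 0), (mk_v1 p a Red Blue Red Red (0 + 1/2)) in Q.
        discriminate. apply sh0, ce_refl. apply ce_refl.
    + assert (Htr : forall t, wsym_t c00 t -> hz t).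
      { intros t Ht. apply NNPP; intro N. apply NT. exists t; auto. }
      destruct (G2 c00 (mk p a Blue Red Red Blue) 0 y z) as [D|[D|[r0 [S0 H0]]]];
        try (apply mk_per; auto); auto.
      { intros x. apply lab_swap0; auto; discriminate. }
      { intros x Hx. apply agree0; auto. }
      { unfold c00. rewrite !mk_v0; try apply ce_refl. discriminate. }
      { apply Vy. } { apply Vz. }
      { eapply FIN; eauto. } { eapply FIN; eauto. }
      destruct (G2 c00 (mk p a Red Blue Blue Red) a y z) as [D|[D|[r1 [S1 H1']]]];
        try (apply mk_per; auto); auto.
      { intros x. apply lab_swapa; auto; discriminate. }
      { intros x Hx. apply agreea; auto. }
      { unfold c00. rewrite !mk_v2; try apply ce_refl; auto. discriminate. }
      { apply Vy. } { apply Vz. }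
      { eapply FIN; eauto. } { eapply FIN; eauto. }
      exfalso.
      destruct (Htr _ (W3 c00 r0 r1 (W2 c00 r0 Hc00 S0) (W2 c00 r1 Hc00 S1))) as [k Hk].
      destruct H0 as [m0 Hm0]. destruct H1' as [m1 Hm1].
      apply (Ha (m0 - m1 - k)%Z). izr. lra.
  - destruct (classic (exists y, notW a y /\ p y <> p (y+1/2))) as [[y [Hy Py]]|N1].
    +
      assert (HA : forall x, notW a x -> p x <> p (x + 1/2) -> hz (x - y)).
      { intros x Hx Px. apply NNPP; intro N. apply N3. exists x, y. tauto. }
      destruct (classic (hz (2*y - 2*a))) as [G|G].
      * assert (D : distinguishing (mk p a Red Red Red Red) \/ distinguishing (mk p a Blue Blue Red Red)).
        { apply (Core _ _ 0 y); try (apply mk_per; auto).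
          - intros x Hx. apply agree0; auto.
          - rewrite !mk_v0; try apply ce_refl. discriminate.
          - apply vp_half; auto.
          - apply vp_half; auto.
          - apply A_unif; auto.
          - apply A_unif; auto.
          - apply (nW_f0 a); auto.
          - intros [k Hk]. destruct G as [m Hm]. apply (Ha (k - m)%Z). izr. lra. }
        destruct D as [D|D]; eapply FIN; eauto.
      * assert (D : distinguishing (mk p a Red Red Red Red) \/ distinguishing (mk p a Red Red Blue Blue)).
        { apply (Core _ _ a y); try (apply mk_per; auto).
          - intros x Hx. apply agreea; auto.
          - rewrite !mk_v2; try apply ce_refl; auto. discriminate.
          - apply vp_half; auto.
          - apply vp_half; auto.
          - apply A_unif; auto.
          - apply A_unif; auto.
          - apply (nW_fa a); auto.
          - auto. }
        destruct D as [D|D]; eapply FIN; eauto.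
    +
      assert (H1 : forall x, notW a x -> p x = p (x + 1/2)).
      { intros x Hx. apply NNPP; intro N. apply N1. exists x; auto. }
      assert (D : distinguishing (mk p a Red Blue Red Red) \/ distinguishing (mk p a Red Blue Blue Blue)).
      { apply (Core _ _ a 0); try (apply mk_per; auto).
        - intros x Hx. apply agreea; auto.
        - rewrite !mk_v2; try apply ce_refl; auto. discriminate.
        - rewrite mk_v0, mk_v1; try apply ce_refl. discriminate. apply sh0, ce_refl.
        - rewrite mk_v0, mk_v1; try apply ce_refl. discriminate. apply sh0, ce_refl.
        - apply A_case1; auto.
        - apply A_case1; auto.
        - auto.
        - intros [k Hk]. apply (Ha (-k)%Z). izr. lra. }
      destruct D as [D|D]; eapply FIN; eauto.
Qed.
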